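(* Let $A$ be a commutative noetherian local ring and let $x,y\in A$ be a regular exact pair of zero divisors. Let $a\in A$ be weakly regular on the $A$-module $A/(x,y)$, and let $b\in A$ be a non-unit. Then (a) the $A$-modules $G_a$ and $G_{ab}$ are not isomorphic, and (b) the $A$-modules $H_a$ and $H_{ab}$ are not isomorphic.
   Context: Two non-units $x,y\in A$ form an exact pair of zero divisors if $\operatorname{Ann}_A(x)=(y)$ and $\operatorname{Ann}_A(y)=(x)$; such a pair is regular if $(x)\cap(y)=0$. An element $a\in A$ is weakly regular on a module $M$ if multiplication by $a$ on $M$ is injective. For $a\in A$, let $\gamma_a=\begin{pmatrix} x & a\\ 0 & y\end{pmatrix}$ and $\eta_a=\begin{pmatrix} y & -a\\ 0 & x\end{pmatrix}$, viewed as $A$-linear maps $A^2\to A^2$ acting on column vectors, and set $G_a=\operatorname{Coker}\gamma_a$, $H_a=\operatorname{Coker}\eta_a$. *)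

(* Defs.v *)
From HB Require Import structures.
From mathcomp Require Import all_boot all_order all_algebra.
Set Implicit Arguments. Unset Strict Implicit. Unset Printing Implicit Defensive.
Import GRing.Theory.
Local Open Scope ring_scope.

Definition is_ideal (A : comUnitRingType) (I : A -> Prop) : Prop :=
  I 0 /\ (forall u v, I u -> I v -> I (u + v)) /\ (forall r u, I u -> I (r * u)).

Definition proper_ideal (A : comUnitRingType) (I : A -> Prop) : Prop :=
  is_ideal I /\ ~ I 1.

Definition maximal_ideal (A : comUnitRingType) (I : A -> Prop) : Prop :=
  proper_ideal I /\
  forall J : A -> Prop, is_ideal J -> (forall u, I u -> J u) ->
    (forall u, J u <-> I u) \/ (forall u, J u).

Definition local_ring (A : comUnitRingType) : Prop :=
  (exists m : A -> Prop, maximal_ideal m) /\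
  (forall m1 m2 : A -> Prop, maximal_ideal m1 -> maximal_ideal m2 ->
     forall u, m1 u <-> m2 u).

Definition noetherian_ring (A : comUnitRingType) : Prop :=
  forall I : nat -> A -> Prop,
    (forall n, is_ideal (I n)) ->
    (forall n u, I n u -> I n.+1 u) ->
    exists n, forall m, (n <= m)%N -> forall u, I m u <-> I n u.

Definition pideal (A : comUnitRingType) (x : A) : A -> Prop :=
  fun z => exists r, z = r * x.
Definition ideal2 (A : comUnitRingType) (x y : A) : A -> Prop :=
  fun z => exists r s, z = r * x + s * y.

Definition ann (A : comUnitRingType) (x : A) : A -> Prop :=
  fun z => z * x = 0.

Definition exact_pair_zd (A : comUnitRingType) (x y : A) : Prop :=
  x \isn't a GRing.unit /\ y \isn't a GRing.unit /\
  (forall z, ann x z <-> pideal y z) /\ (forall z, ann y z <-> pideal x z).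

Definition regular_exact_pair (A : comUnitRingType) (x y : A) : Prop :=
  exact_pair_zd x y /\ (forall z, pideal x z -> pideal y z -> z = 0).

Definition weakly_regular_quot2 (A : comUnitRingType) (a x y : A) : Prop :=
  forall z, ideal2 x y (a * z) -> ideal2 x y z.

(* gamma_a = [[x, a], [0, y]],  eta_a = [[y, -a], [0, x]] *)
Definition upper2 (A : comUnitRingType) (p q r : A) : 'M[A]_2 :=
  \matrix_(i < 2, j < 2)
    (if i == 0 :> nat then (if j == 0 :> nat then p else q)
     else (if j == 0 :> nat then 0 else r)).

Definition gamma (A : comUnitRingType) (x y a : A) : 'M[A]_2 := upper2 x a y.
Definition eta (A : comUnitRingType) (x y a : A) : 'M[A]_2 := upper2 y (- a) x.

Definition in_img (A : comUnitRingType) (M : 'M[A]_2) (v : 'cV[A]_2) : Prop :=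
  exists u, v = M *m u.

(* Coker M = A^2 / Im M, elements represented by vectors of A^2.
   An A-module isomorphism Coker M -> Coker N is a map on classes, given by a
   function on representatives that is well defined, A-linear, injective and
   surjective on classes. *)
Definition coker_iso (A : comUnitRingType) (M N : 'M[A]_2) : Prop :=
  exists f : 'cV[A]_2 -> 'cV[A]_2,
    [/\ (forall v w, in_img M (v - w) -> in_img N (f v - f w)),
        (forall v w, in_img N (f (v + w) - (f v + f w))),
        (forall (r : A) v, in_img N (f (r *: v) - r *: f v)),
        (forall v w, in_img N (f v - f w) -> in_img M (v - w)) &
        (forall w, exists v, in_img N (w - f v))].

(* Main.v *)
Require Import Defs.
From mathcomp Require Import all_boot all_order all_algebra.
From mathcomp Require Import ring.
From Stdlib Require Import Classical ClassicalEpsilon.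
Set Implicit Arguments. Unset Strict Implicit. Unset Printing Implicit Defensive.
Import GRing.Theory.
Local Open Scope ring_scope.
Section Core.
Variable A : comUnitRingType.
Variable J : A -> Prop.
Hypothesis HJ : is_ideal J.

Lemma J0 : J 0. Proof. by case: HJ. Qed.
Lemma JD u v : J u -> J v -> J (u + v). Proof. by case: HJ => _ [H _]; apply: H. Qed.
Lemma JMl r u : J u -> J (r * u). Proof. by case: HJ => _ [_ H]; apply: H. Qed.
Lemma JMr r u : J u -> J (u * r). Proof. by rewrite mulrC; apply: JMl. Qed.
Lemma JN u : J u -> J (- u).
Proof. by move=> H; rewrite -mulN1r; apply: JMl. Qed.
Lemma JB u v : J u -> J v -> J (u - v).
Proof. by move=> ??; apply: JD => //; apply: JN. Qed.

Lemma img_J (p q r : A) (v : 'cV[A]_2) : J p -> J q -> J r ->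
  in_img (upper2 p q r) v -> forall i, J (v i 0).
Proof.
move=> Hp Hq Hr [u ->] i; rewrite mxE !big_ord_recl big_ord0 !mxE /=.
case: i => [[|[|k]] Hk] //=.
- by rewrite addr0; apply: JD; apply: JMr.
- by rewrite addr0 mul0r add0r; apply: JMr.
Qed.
End Core.

Section S.
Variable A : comUnitRingType.
Definition e0 : 'cV[A]_2 := \col_(i<2) (if i == 0 :> nat then 1 else 0).
Definition e1 : 'cV[A]_2 := \col_(i<2) (if i == 0 :> nat then 0 else 1).
Lemma ev (v : 'cV[A]_2) : v = v 0 0 *: e0 + v 1 0 *: e1.
Proof.
apply/matrixP => j k; rewrite !mxE ord1.
case: j => [[|[|?]] Hj] //=.
- by rewrite mulr1 mulr0 addr0; congr (v _ _); apply: val_inj.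
- by rewrite mulr1 mulr0 add0r; congr (v _ _); apply: val_inj.
Qed.

Variable J : A -> Prop.
Hypothesis HJ : is_ideal J.

Lemma core (p q r p' q' r' : A) : J p' -> J q' -> J r' ->
  coker_iso (upper2 p q r) (upper2 p' q' r') -> J q.
Proof.
move=> Hp Hq Hr [f [Hwd Hadd Hsc Hinj Hsurj]].
have IJ := img_J HJ Hp Hq Hr.
have lin : forall v i, J (f v i 0 - (v 0 0 * f e0 i 0 + v 1 0 * f e1 i 0)).
  move=> v i; rewrite {1}(ev v).
  have H1 := IJ _ (Hadd (v 0 0 *: e0) (v 1 0 *: e1)) i.
  have H2 := IJ _ (Hsc (v 0 0) e0) i.
  have H3 := IJ _ (Hsc (v 1 0) e1) i.
  rewrite !mxE in H1 H2 H3.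
  move: H1 H2 H3; set X := f _ i 0; set Y := f (_ *: e0) i 0; set Z := f (_ *: e1) i 0.
  move=> H1 H2 H3.
  have -> : X - (v 0 0 * f e0 i 0 + v 1 0 * f e1 i 0) = (X - (Y + Z)) + (Y - v 0 0 * f e0 i 0) + (Z - v 1 0 * f e1 i 0)
    by ring.
  exact: (JD HJ (JD HJ H1 H2) H3).
have f0 : forall i, J (f 0 i 0).
  move=> i; have := IJ _ (Hsc 0 0) i; rewrite scale0r !mxE.
  by rewrite mul0r subr0.
have key : forall i, J (q * f e0 i 0 + r * f e1 i 0).
  move=> i.
  have hw : in_img (upper2 p q r) (upper2 p q r *m e1 - 0) by exists e1; rewrite subr0.
  have H1 := IJ _ (Hwd _ _ hw) i; rewrite !mxE in H1.
  have H2 := lin (upper2 p q r *m e1) i.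
  have E0 : (upper2 p q r *m e1) 0 0 = q.
    by rewrite mxE !big_ord_recl big_ord0 !mxE /=; ring.
  have E1 : (upper2 p q r *m e1) 1 0 = r.
    by rewrite mxE !big_ord_recl big_ord0 !mxE /=; ring.
  rewrite E0 E1 in H2.
  move: H1 H2; set X := f _ i 0 => H1 H2.
  have -> : q * f e0 i 0 + r * f e1 i 0 = (X - f 0 i 0) + f 0 i 0 - (X - (q * f e0 i 0 + r * f e1 i 0)) by ring.
  exact: (JB HJ (JD HJ H1 (f0 i)) H2).
have surj : forall e : 'cV[A]_2, exists w : 'cV[A]_2, forall i,
    J (e i 0 - (w 0 0 * f e0 i 0 + w 1 0 * f e1 i 0)).
  move=> e; have [w Hw] := Hsurj e; exists w => i.
  have H1 := IJ _ Hw i; rewrite !mxE in H1.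
  have H2 := lin w i.
  have -> : e i 0 - (w 0 0 * f e0 i 0 + w 1 0 * f e1 i 0) = (e i 0 - f w i 0) + (f w i 0 - (w 0 0 * f e0 i 0 + w 1 0 * f e1 i 0)) by ring.
  exact: (JD HJ H1 H2).
have [w0 S0] := surj e0.
have [w1 S1] := surj e1.
have K0 := key 0; have K1 := key 1.
have S00 := S0 0; have S01 := S0 1; have S10 := S1 0; have S11 := S1 1.
rewrite !mxE /= in S00 S01 S10 S11.
move: K0 K1 S00 S01 S10 S11.
set a0 := f e0 0 0; set a1 := f e0 1 0; set b0 := f e1 0 0; set b1 := f e1 1 0.
set u00 := w0 0 0; set u01 := w0 1 0; set u10 := w1 0 0; set u11 := w1 1 0.
move=> K0 K1 E00 E10 E01 E11.
set F00 := 1 - _ in E00; set F10 := 0 - _ in E10; set F01 := 0 - _ in E01; set F11 := 1 - _ in E11.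
have -> : q = (u00 * u11 - u10 * u01) * (b1 * (q * a0 + r * b0) - b0 * (q * a1 + r * b1))
   + q * (F00 + F11 - F00 * F11 + F01 * F10).
  rewrite /F00 /F01 /F10 /F11; ring.
apply: (JD HJ); first by apply: (JMl HJ); apply: (JB HJ); apply: (JMl HJ).
apply: (JMl HJ); apply: (JD HJ); last by apply: (JMl HJ).
apply: (JB HJ); last by apply: (JMl HJ).
exact: (JD HJ).
Qed.
End S.

Section L.
Variable A : comUnitRingType.

Lemma exists_max : noetherian_ring A -> forall I : A -> Prop, Defs.proper_ideal I ->
  exists m, Defs.maximal_ideal m /\ forall u, I u -> m u.
Proof.
move=> HN I HI; apply: NNPP => Hno.
pose P (K : A -> Prop) := Defs.proper_ideal K /\ (forall u, I u -> K u).
pose Q (K K' : A -> Prop) := P K' /\ (forall u, K u -> K' u) /\ ~ (forall u, K' u <-> K u).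
have step : forall K, P K -> exists K', Q K K'.
  move=> K [PK IK]; apply: NNPP => Hn.
  apply: Hno; exists K; split => //; split => // J IJ KJ.
  apply: NNPP => HH.
  apply: Hn; exists J; split; last split => //.
  - split; last by move=> u Iu; apply: KJ; apply: IK.
    split => // J1; apply: HH; right => u.
    by case: IJ => _ [_ H]; rewrite -(mulr1 u); apply: H.
  - by move=> Heq; apply: HH; left.
pose next K := epsilon (inhabits K) (Q K).
pose c n := iter n next I.
have Pc : forall n, P (c n) /\ Q (c n) (c n.+1).
  elim=> [|n [_ [IH _]]].
  - have PI : P I by split.
    by split => //; apply: (epsilon_spec (inhabits I) (Q I)); exact: step PI.
  - split => //; apply: (epsilon_spec (inhabits (c n.+1)) (Q (c n.+1))); exact: step IH.
have [N0 HN0] : exists n0, forall m, (n0 <= m)%N -> forall u, c m u <-> c n0 u.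
  apply: HN => [k|k u].
  - by case: (Pc k) => [[[]]].
  - by case: (Pc k) => _ [_ [H _]]; apply: H.
case: (Pc N0) => _ [_ [_ H]]; apply: H; apply: HN0; exact: leqnSn.
Qed.

Lemma nonunit_m (m : A -> Prop) : noetherian_ring A -> local_ring A -> Defs.maximal_ideal m ->
  forall z, z \isn't a GRing.unit -> m z.
Proof.
move=> HN [_ HL] Hm z Hz.
have Pz : Defs.proper_ideal (pideal z).
  split.
  - split; first by exists 0; rewrite mul0r.
    split; first by move=> u v [r1 ->] [r2 ->]; exists (r1 + r2); rewrite mulrDl.
    by move=> r u [r1 ->]; exists (r * r1); rewrite mulrA.
  - move=> [r Hr]; move/negP: Hz; apply.
    by apply/unitrP; exists r; split; rewrite // mulrC.
have [m' [Hm' Im']] := exists_max HN Pz.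
by apply/(HL _ _ Hm' Hm); apply: Im'; exists 1; rewrite mul1r.
Qed.
End L.

Unset Implicit Arguments.

Theorem theorem5p2 (A : comUnitRingType) (x y a b : A) :
  noetherian_ring A -> local_ring A ->
  regular_exact_pair x y ->
  weakly_regular_quot2 a x y ->
  b \isn't a GRing.unit ->
  ~ coker_iso (gamma x y a) (gamma x y (a * b)) /\
  ~ coker_iso (eta x y a) (eta x y (a * b)).
Proof.
move=> HN HL [[Hx [Hy _]] _] Hwr Hb.
pose J z := exists r1 r2 r3, z = r1 * x + r2 * y + r3 * (a * b).
have HJ : is_ideal J.
  split; first by exists 0, 0, 0; rewrite !mul0r !addr0.
  split.
  - move=> u v [r1 [r2 [r3 ->]]] [s1 [s2 [s3 ->]]].
    by exists (r1 + s1), (r2 + s2), (r3 + s3); ring.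
  - move=> r u [r1 [r2 [r3 ->]]].
    by exists (r * r1), (r * r2), (r * r3); ring.
have Jx : J x by exists 1, 0, 0; ring.
have Jy : J y by exists 0, 1, 0; ring.
have Jab : J (a * b) by exists 0, 0, 1; ring.
have fin : ~ J a.
  move=> [r1 [r2 [r3 Ha]]].
  have : ideal2 x y (a * (1 - r3 * b)).
    exists r1, r2.
    have -> : a * (1 - r3 * b) = a - r3 * (a * b) by ring.
    by rewrite {1}Ha; ring.
  move/Hwr => [s [t Ht]].
  case: HL => [[m Hm] HL'].
  have mx := nonunit_m HN (conj (ex_intro _ m Hm) HL') Hm Hx.
  have my := nonunit_m HN (conj (ex_intro _ m Hm) HL') Hm Hy.
  have mb := nonunit_m HN (conj (ex_intro _ m Hm) HL') Hm Hb.
  case: Hm => [[[m0 [madd mmul]] not1] _].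
  apply: not1.
  have -> : 1 = (1 - r3 * b) + r3 * b by ring.
  rewrite Ht; apply: (madd); last exact: (mmul).
  by apply: (madd); apply: (mmul).
split => H.
- by apply: fin; exact: (core HJ Jx Jab Jy H).
- have := core HJ Jy (JN HJ Jab) Jx H.
  by move/(JN HJ); rewrite opprK.
Qed.
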